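(* Let $n\ge1$, $s\in\{1,\dots,n\}$, let $C\in\mathbb{R}^{n\times n}$ be symmetric positive definite, and let $x\in[0,1]^n$ with $\sum_{i=1}^n x_i=s$. Let $0\le t_1\le t_2\le\lambda_{\min}(C)$, and let $\nu^{t_1}$ and $\mu^{t_2}$ be the vectors of eigenvalues of $M_{t_1}(x)$ and $M_{t_2}(x)$, respectively, sorted in nonincreasing order. Then: (i) $\mu^{t_2}+t_2\mathbb{I}_s\succ\nu^{t_1}+t_1\mathbb{I}_s$; (ii) $\sum_{i=1}^{\ell}\mu^{t_2}_i+(t_2-t_1)\sum_{i=1}^{\ell}x^\downarrow_i\ge\sum_{i=1}^{\ell}\nu^{t_1}_i$ for each $\ell\in\{1,\dots,s\}$; (iii) $\mu^{t_2}_i+t_2-t_1\ge\nu^{t_1}_i$ for each $i\in\{1,\dots,s\}$.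
   Context: $\lambda_{\min}(C)$ is the smallest eigenvalue of $C$. For $0\le t\le\lambda_{\min}(C)$ let $A(t)\in\mathbb{R}^{n\times n}$ be a Cholesky factor of $C-tI$ (so $C-tI=A(t)^\top A(t)$), with $i$-th column $a_i(t)$, and $M_t(x)=\sum_i x_i a_i(t)a_i(t)^\top$. $\mathbb{I}_s\in\mathbb{R}^n$ has first $s$ entries $1$ and the rest $0$. For a vector $y$, $y^\downarrow_i$ denotes its $i$-th largest entry. For $\mu,\nu\in\mathbb{R}^n$, $\mu\succ\nu$ ($\mu$ majorizes $\nu$) means $\sum_{i=1}^\ell\mu^\downarrow_i\ge\sum_{i=1}^\ell\nu^\downarrow_i$ for all $\ell\in\{1,\dots,n-1\}$ and $\sum_{i=1}^n\mu_i=\sum_{i=1}^n\nu_i$. *)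

(* Defs.v *)
From HB Require Import structures.
From mathcomp Require Import all_boot all_order all_algebra.
From mathcomp Require Import reals.
Set Implicit Arguments. Unset Strict Implicit. Unset Printing Implicit Defensive.
Import Order.TTheory GRing.Theory Num.Theory.
Local Open Scope ring_scope.

Section Defs.
Variable R : realType.

Definition sym_pd n (C : 'M[R]_n) : Prop :=
  C^T = C /\ forall v : 'cV[R]_n, v != 0 -> 0 < (v^T *m C *m v) 0 0.

Definition sorted_eigs n (M : 'M[R]_n) (mu : 'I_n -> R) : Prop :=
  (forall i j : 'I_n, (i <= j)%N -> mu j <= mu i) /\
  char_poly M = \prod_(i < n) ('X - (mu i)%:P).

Definition cholesky_factor n (D A : 'M[R]_n) : Prop :=
  D = A^T *m A /\ (forall i j : 'I_n, (j < i)%N -> A i j = 0) /\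
  (forall i : 'I_n, 0 <= A i i).

Definition Mx n (A : 'M[R]_n) (x : 'I_n -> R) : 'M[R]_n :=
  \sum_(i < n) x i *: (col i A *m (col i A)^T).

Definition ind n (s : nat) : 'I_n -> R := fun i => if (i < s)%N then 1 else 0.

Definition down n (y : 'I_n -> R) : seq R := sort (fun a b => b <= a) [seq y i | i <- enum 'I_n].

Definition psum n (y : 'I_n -> R) (l : nat) : R := \sum_(i < l) nth 0 (down y) i.

Definition majorizes n (mu nu : 'I_n -> R) : Prop :=
  (forall l : nat, (1 <= l <= n.-1)%N -> psum nu l <= psum mu l) /\
  \sum_(i < n) mu i = \sum_(i < n) nu i.

End Defs.

(* Main.v *)
Require Import Defs.
From HB Require Import structures.
From mathcomp Require Import all_boot all_order all_algebra.
From mathcomp Require Import fingroup perm reals.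
From mathcomp.real_closed Require Import complex.
Set Implicit Arguments. Unset Strict Implicit. Unset Printing Implicit Defensive.
Import Order.TTheory GRing.Theory Num.Theory.
Local Open Scope ring_scope.
Local Open Scope sesquilinear_scope.
Lemma char_poly_mulC (F : fieldType) (n : nat) (P Q : 'M[F]_n) :
  char_poly (P *m Q) = char_poly (Q *m P).
Proof.
rewrite /char_poly /char_poly_mx !map_mxM.
set Pp := map_mx polyC P; set Qp := map_mx polyC Q.
set x : {poly F} := 'X.
pose B := block_mx 1%:M Pp Qp (x%:M).
have e1 : block_mx 1%:M 0 (- Qp) 1%:M *m B = block_mx 1%:M Pp 0 (x%:M - Qp *m Pp).
  rewrite mulmx_block !mul1mx !mul0mx !addr0 mulmx1 !mulNmx addNr.
  by rewrite addrC.
have e2 : block_mx (x%:M) (- Pp) 0 1%:M *m B = block_mx (x%:M - Pp *m Qp) 0 Qp (x%:M).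
  rewrite mulmx_block !mul1mx !mul0mx !add0r mulmx1 !mulNmx.
  by rewrite scalar_mxC addrN addrC.
have d1 := congr1 determinant e1.
have d2 := congr1 determinant e2.
rewrite det_mulmx det_lblock !det1 mul1r det_ublock det1 mul1r in d1.
rewrite det_mulmx det_ublock det1 mulr1 det_lblock det_scalar in d2.
rewrite d1 in d2.
apply: (@mulfI _ (x ^+ n)); first by rewrite expf_neq0 // polyX_eq0.
by rewrite mul1r in d2; rewrite d2 mulrC.
Qed.

Lemma char_poly_conj (F : fieldType) (n : nat) (P D : 'M[F]_n) :
  P \in unitmx -> char_poly (invmx P *m D *m P) = char_poly D.
Proof.
by move=> Pu; rewrite char_poly_mulC mulmxA mulmxV // mul1mx.
Qed.
Lemma down_size (R : realType) n (d : 'I_n -> R) : size (down d) = n.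
Proof. by rewrite /down size_sort size_map size_enum_ord. Qed.

Lemma down_sorted (R : realType) n (d : 'I_n -> R) :
  sorted (fun a b : R => b <= a) (down d).
Proof. by apply: sort_sorted => a b; exact: le_total. Qed.

Lemma down_perm (R : realType) n (d : 'I_n -> R) :
  perm_eq (down d) [seq d i | i <- enum 'I_n].
Proof. by rewrite /down perm_sort. Qed.

Lemma ge_trans (R : realType) : transitive (fun a b : R => b <= a).
Proof. by move=> y x z h1 h2; exact: le_trans h2 h1. Qed.

Lemma ge_refl (R : realType) : reflexive (fun a b : R => b <= a).
Proof. by move=> a; exact: lexx. Qed.

Lemma down_mono (R : realType) n (d : 'I_n -> R) (i j : nat) :
  (i <= j)%N -> (j < n)%N -> nth 0 (down d) j <= nth 0 (down d) i.
Proof.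
move=> ij jn.
have := sorted_leq_nth (@ge_trans R) (@ge_refl R) 0 (down_sorted d).
move=> /(_ i j); rewrite !inE down_size; apply => //.
exact: leq_ltn_trans jn.
Qed.

Lemma sum_down (R : realType) n (d : 'I_n -> R) (f : R -> R) :
  \sum_(j < n) f (d j) = \sum_(i < n) f (nth 0 (down d) i).
Proof.
have -> : \sum_(j < n) f (d j) = \sum_(y <- [seq d j | j <- enum 'I_n]) f y.
  by rewrite big_map big_enum.
rewrite -(perm_big _ (down_perm d)) (big_nth 0) down_size big_mkord.
by [].
Qed.
Lemma comb_le (R : realType) n (d w : 'I_n -> R) (l : nat) :
  (l <= n)%N -> (forall j, 0 <= w j <= 1) -> \sum_j w j = l%:R ->
  \sum_j d j * w j <= psum d l.
Proof.
case: l => [|l] ln hw hs.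
  have w0 : forall j, w j = 0.
    by move=> j; apply: (psumr_eq0P _ hs) => // k _; case/andP: (hw k).
  rewrite big1 => [|j _]; last by rewrite w0 mulr0.
  by rewrite /psum big_ord0.
set th := nth 0 (down d) l.
pose f (y : R) := if th <= y then y - th else 0.
have st1 : \sum_j d j * w j <= \sum_j f (d j) + th * l.+1%:R.
  rewrite -hs mulr_sumr -big_split /=; apply: ler_sum => j _.
  rewrite /f; case/andP: (hw j) => w0 w1.
  have -> : d j * w j = (d j - th) * w j + th * w j by rewrite mulrBl subrK.
  rewrite lerD2r; case: ifP => h.
    by rewrite -{2}[d j - th]mulr1 ler_wpM2l // subr_ge0.
  rewrite mulr_le0_ge0 // subr_le0; apply/ltW; rewrite ltNge h //.
apply: (le_trans st1).
rewrite sum_down.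
rewrite (bigID (fun i : 'I_n => (i < l.+1)%N)) /=.
rewrite [X in _ + X + _]big1 => [|i hi]; last first.
  rewrite /f; case: ifP => // h; apply/eqP; rewrite subr_eq0 eq_le h andbT.
  by apply: down_mono => //; move: hi; rewrite -leqNgt => /ltnW.
rewrite [X in X + _]addr0.
have -> : \sum_(i < n | (i < l.+1)%N) f (nth 0 (down d) i)
    = \sum_(i < n | (i < l.+1)%N) (nth 0 (down d) i - th).
  apply: eq_bigr => i hi; rewrite /f ifT //.
  by apply: down_mono => //; rewrite -ltnS.
rewrite -(big_ord_widen n (fun i => nth 0 (down d) i - th) ln).
rewrite sumrB sumr_const card_ord /psum.
by rewrite mulr_natr subrK.
Qed.
Lemma psum_sorted (R : realType) n (y : 'I_n -> R) (l : nat) :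
  (forall i j : 'I_n, (i <= j)%N -> y j <= y i) -> (l <= n)%N ->
  psum y l = \sum_(i < n | (i < l)%N) y i.
Proof.
move=> ys ln.
have e : down y = [seq y i | i <- enum 'I_n].
  rewrite /down sorted_sort //; first exact: ge_trans.
  have : sorted (fun i j : 'I_n => (i <= j)%N) (enum 'I_n).
    by rewrite -(@sorted_map _ _ val leq) val_enum_ord iota_sorted.
  by apply: (@homo_sorted _ _ y) => i j; exact: ys.
rewrite /psum e (big_ord_widen n (fun i => nth 0 [seq y i | i <- enum 'I_n] i) ln).
apply: eq_bigr => i _.
by rewrite (nth_map i) ?size_enum_ord // nth_ord_enum.
Qed.

Lemma down_mem (R : realType) n (y : 'I_n -> R) (i : nat) :
  (i < n)%N -> exists j, nth 0 (down y) i = y j.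
Proof.
move=> iN; have : nth 0 (down y) i \in down y by rewrite mem_nth // down_size.
by rewrite (perm_mem (down_perm y)) => /mapP [j _ ->]; exists j.
Qed.

Lemma psum_le_l (R : realType) n (y : 'I_n -> R) (l : nat) :
  (forall i, y i <= 1) -> (l <= n)%N -> psum y l <= l%:R.
Proof.
move=> y1 ln; rewrite /psum.
apply: (@le_trans _ _ (\sum_(i < l) (1 : R))); last by rewrite sumr_const card_ord.
apply: ler_sum => i _; have [j ->] := down_mem y (leq_trans (ltn_ord i) ln).
exact: y1.
Qed.

Lemma psum_le_sum (R : realType) n (y : 'I_n -> R) (l : nat) :
  (forall i, 0 <= y i) -> (l <= n)%N -> psum y l <= \sum_i y i.
Proof.
move=> y0 ln.
have -> : \sum_i y i = \sum_(i < n) nth 0 (down y) i by exact: (sum_down y id).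
rewrite /psum (big_ord_widen n (fun i => nth 0 (down y) i) ln).
rewrite [X in _ <= X](bigID (fun i : 'I_n => (i < l)%N)) /= lerDl.
apply: sumr_ge0 => i _; have [j ->] := down_mem y (ltn_ord i); exact: y0.
Qed.
Definition sq (R : realType) (z : R[i]) : R := complex.Re z ^+ 2 + complex.Im z ^+ 2.

Definition nrc (R : realType) m n (Y : 'M[R[i]]_(m, n)) (j : 'I_n) : R :=
  \sum_(i < m) sq (Y i j).

Definition spec (R : realType) n (H U : 'M[R[i]]_n) (d : 'I_n -> R) :=
  U *m U^t* = 1%:M /\ H = U^t* *m diag_mx (\row_j ((d j)%:C)%C) *m U.

Lemma sqE (R : realType) (z : R[i]) : z * z^* = ((sq z)%:C)%C.
Proof. by rewrite -normCK -add_Re2_Im2. Qed.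

Lemma sq_ge0 (R : realType) (z : R[i]) : 0 <= sq z.
Proof. by rewrite /sq addr_ge0 // sqr_ge0. Qed.

Lemma sq_eq0 (R : realType) (z : R[i]) : sq z = 0 -> z = 0.
Proof.
move=> /eqP; rewrite /sq paddr_eq0 ?sqr_ge0 // !sqrf_eq0 => /andP [/eqP h1 /eqP h2].
by case: z h1 h2 => a b /= -> ->.
Qed.

Lemma sq_real (R : realType) (r : R) : sq ((r%:C)%C) = r ^+ 2.
Proof. by rewrite /sq /= expr0n /= addr0. Qed.

Lemma nrc_ge0 (R : realType) m n (Y : 'M[R[i]]_(m, n)) j : 0 <= nrc Y j.
Proof. by apply: sumr_ge0 => i _; exact: sq_ge0. Qed.

Lemma unitaryC (R : realType) n (U : 'M[R[i]]_n) :
  U *m U^t* = 1%:M -> U^t* *m U = 1%:M.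
Proof. exact: mulmx1C. Qed.

Lemma trmxC_mul (R : realType) m n p (A : 'M[R[i]]_(m, n)) (B : 'M[R[i]]_(n, p)) :
  (A *m B)^t* = B^t* *m A^t*.
Proof. by rewrite trmx_mul map_mxM. Qed.

Lemma toC_sum (R : realType) (I : finType) (f : I -> R) :
  ((\sum_i f i)%:C)%C = \sum_i ((f i)%:C)%C.
Proof. exact: rmorph_sum. Qed.

Lemma toC_mul (R : realType) (a b : R) : ((a * b)%:C)%C = (a%:C)%C * (b%:C)%C.
Proof. exact: rmorphM. Qed.

Lemma TF (R : realType) n (H U : 'M[R[i]]_n) (d : 'I_n -> R) k (W : 'M[R[i]]_(k, n)) :
  spec H U d ->
  \tr (W *m H *m W^t*) = ((\sum_j d j * nrc (W *m U^t*) j)%:C)%C.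
Proof.
case=> Uu ->.
set Y := W *m U^t*.
have -> : W *m (U^t* *m diag_mx (\row_j ((d j)%:C)%C) *m U) *m W^t*
    = Y *m diag_mx (\row_j ((d j)%:C)%C) *m Y^t*.
  by rewrite /Y trmxC_mul trmxCK !mulmxA.
rewrite /mxtrace.
under eq_bigr => i _ do rewrite mxE mul_mx_diag.
under eq_bigr => i _ do under eq_bigr => j _ do rewrite !mxE.
rewrite exchange_big toC_sum; apply: eq_bigr => j _.
rewrite toC_mul /nrc toC_sum mulr_sumr; apply: eq_bigr => i _.
by rewrite -sqE /Y !mxE mulrAC mulrC.
Qed.
Lemma spec_id (R : realType) n (U : 'M[R[i]]_n) :
  U *m U^t* = 1%:M -> spec 1%:M U (fun _ => 1).
Proof.
move=> Uu; split => //.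
have -> : (\row_j ((1 : R)%:C)%C : 'rV[R[i]]_n) = const_mx 1.
  by apply/rowP => j; rewrite !mxE.
by rewrite diag_const_mx mulmx1 unitaryC.
Qed.

Lemma unitary1 (R : realType) n : (1%:M : 'M[R[i]]_n) *m 1%:M^t* = 1%:M.
Proof. by rewrite trmx1 map_mx1 mulmx1. Qed.

Lemma nrc_sum (R : realType) n k (W : 'M[R[i]]_(k, n)) :
  \tr (W *m W^t*) = ((\sum_j nrc W j)%:C)%C.
Proof.
have := TF W (spec_id (unitary1 R n)).
rewrite mulmx1 trmx1 map_mx1 mulmx1 => ->.
by under eq_bigr => j _ do rewrite mul1r.
Qed.

Lemma ORTH (R : realType) n l (W : 'M[R[i]]_(l, n)) :
  W *m W^t* = 1%:M -> (forall j, nrc W j <= 1) /\ \sum_j nrc W j = l%:R.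
Proof.
move=> Wu; split; last first.
  apply: (@complexI R); rewrite -nrc_sum Wu mxtrace1.
  by rewrite rmorph_nat.
move=> j; set Pm := W^t* *m W.
have PP : Pm *m Pm = Pm by rewrite /Pm mulmxA -[W^t* *m W *m W^t*]mulmxA Wu mulmx1.
have Ph : forall a b, Pm a b = (Pm b a)^*.
  have Pt : Pm^t* = Pm by rewrite /Pm trmxC_mul trmxCK.
  by move=> a b; rewrite -{1}Pt !mxE.
have Pjj : Pm j j = ((nrc W j)%:C)%C.
  rewrite /Pm mxE /nrc toC_sum; apply: eq_bigr => i _.
  by rewrite -sqE !mxE mulrC.
have e : nrc W j = \sum_k sq (Pm j k).
  apply: (@complexI R); rewrite -Pjj -{1}PP mxE toC_sum; apply: eq_bigr => k _.
  by rewrite -sqE -Ph.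
have h : nrc W j ^+ 2 <= nrc W j.
  rewrite {2}e (bigD1 j) //= Pjj sq_real lerDl.
  by apply: sumr_ge0 => k _; exact: sq_ge0.
have := nrc_ge0 W j; move: h; set w := nrc W j => h w0.
case: (leP w 1) => // w1.
have : w < w ^+ 2 by rewrite expr2 -{1}[w]mulr1 ltr_pM2l // (lt_trans ltr01).
by rewrite ltNge h.
Qed.

Lemma TRACE (R : realType) n (H U : 'M[R[i]]_n) (d : 'I_n -> R) :
  spec H U d -> \tr H = ((\sum_j d j)%:C)%C.
Proof.
case=> Uu ->; rewrite mxtrace_mulC mulmxA Uu mul1mx mxtrace_diag toC_sum.
by apply: eq_bigr => j _; rewrite mxE.
Qed.
Lemma KFU (R : realType) n (H U : 'M[R[i]]_n) (d : 'I_n -> R) l (W : 'M[R[i]]_(l, n)) :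
  spec H U d -> (l <= n)%N -> W *m W^t* = 1%:M ->
  exists2 T, \tr (W *m H *m W^t*) = (T%:C)%C & T <= psum d l.
Proof.
move=> sp ln Wu; exists (\sum_j d j * nrc (W *m U^t*) j); first exact: TF.
have Yu : (W *m U^t*) *m (W *m U^t*)^t* = 1%:M.
  case: sp => Uu _.
  by rewrite trmxC_mul trmxCK mulmxA -[W *m U^t* *m U]mulmxA unitaryC // mulmx1.
have [w1 ws] := ORTH Yu.
apply: comb_le => // j; rewrite w1 andbT; exact: nrc_ge0.
Qed.

Lemma nrc_pid (R : realType) n l (j : 'I_n) :
  nrc (pid_mx l : 'M[R[i]]_(l, n)) j = if (j < l)%N then 1 else 0.
Proof.
rewrite /nrc.
have e : forall i : 'I_l, sq ((pid_mx l : 'M[R[i]]_(l, n)) i j) = ((i : nat) == j)%:R.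
  move=> i; rewrite mxE ltn_ord andbT; case: eqP => _ /=.
    by rewrite /sq /= expr1n expr0n /= addr0.
  by rewrite /sq /= expr0n /= addr0.
under eq_bigr => i _ do rewrite e.
case: ifP => jl.
  rewrite (bigD1 (Ordinal jl)) //= eqxx big1 ?addr0 // => i hi.
  have : (i : nat) != j by apply: contra hi => /eqP h; apply/eqP/val_inj.
  by move/negbTE ->.
by rewrite big1 // => i _; case: eqP => // h; rewrite -h ltn_ord in jl.
Qed.

Lemma KFA (R : realType) n (H U : 'M[R[i]]_n) (d : 'I_n -> R) l :
  spec H U d -> (l <= n)%N ->
  exists2 W : 'M[R[i]]_(l, n), W *m W^t* = 1%:M &
    \tr (W *m H *m W^t*) = ((\sum_(i < n | (i < l)%N) d i)%:C)%C.
Proof.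
move=> sp ln; exists (pid_mx l *m U).
  case: sp => Uu _.
  rewrite trmxC_mul mulmxA -[pid_mx l *m U *m _]mulmxA Uu mulmx1.
  rewrite tr_pid_mx map_pid_mx mul_pid_mx minnn.
  by rewrite (minn_idPr ln) pid_mx_1.
rewrite (TF _ sp); congr (_%:C)%C.
case: sp => Uu _; rewrite -mulmxA Uu mulmx1.
rewrite [RHS]big_mkcond /=; apply: eq_bigr => i _.
by rewrite (@nrc_pid R n l i); case: ifP; rewrite ?mulr1 ?mulr0.
Qed.
Lemma tr_split (R : realType) n k (W : 'M[R[i]]_(k, n)) (H2 H3 : 'M[R[i]]_n) (c : R[i]) :
  \tr (W *m (H2 + c *: H3) *m W^t*) = \tr (W *m H2 *m W^t*) + c * \tr (W *m H3 *m W^t*).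
Proof.
by rewrite mulmxDr mulmxDl mxtraceD -scalemxAr -scalemxAl mxtraceZ.
Qed.

Lemma KF (R : realType) n (H1 H2 H3 U1 U2 U3 : 'M[R[i]]_n) (nu mu e : 'I_n -> R) (c : R) l :
  spec H1 U1 nu -> spec H2 U2 mu -> spec H3 U3 e -> H1 = H2 + (c%:C)%C *: H3 -> 0 <= c ->
  (forall i j : 'I_n, (i <= j)%N -> mu j <= mu i) -> (l <= n)%N ->
  \sum_(i < n | (i < l)%N) nu i <= \sum_(i < n | (i < l)%N) mu i + c * psum e l.
Proof.
move=> s1 s2 s3 eH c0 ms ln.
have [W Wu trW] := KFA s1 ln.
have [T2 e2 le2] := KFU s2 ln Wu.
have [T3 e3 le3] := KFU s3 ln Wu.
have : ((\sum_(i < n | (i < l)%N) nu i)%:C)%C = ((T2 + c * T3)%:C)%C.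
  by rewrite -trW eH tr_split e2 e3 rmorphD rmorphM.
move/complexI ->; rewrite -(psum_sorted ms ln).
by rewrite lerD // ler_wpM2l.
Qed.
Lemma pidE (R : realType) n (y : 'rV[R[i]]_n) r (j : 'I_n) :
  (y *m pid_mx r) 0 j = if (j < r)%N then y 0 j else 0.
Proof.
rewrite mxE (bigD1 j) //= big1 => [|k hk]; last first.
  rewrite mxE; case: eqP => h; last by rewrite mulr0.
  by case/negP: hk; apply/eqP/val_inj.
by rewrite mxE eqxx /= addr0; case: ifP; rewrite ?mulr1 ?mulr0.
Qed.

Lemma copidE (R : realType) n (y : 'rV[R[i]]_n) r (j : 'I_n) :
  (y *m copid_mx r) 0 j = if (j < r)%N then 0 else y 0 j.
Proof.
rewrite /copid_mx mulmxBr mulmx1.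
have -> : (y - y *m pid_mx r) 0 j = y 0 j - (y *m pid_mx r) 0 j by rewrite !mxE.
rewrite pidE.
by case: ifP; rewrite ?subrr ?subr0.
Qed.

Lemma sum_nrc_row (R : realType) n (v : 'rV[R[i]]_n) :
  \sum_j nrc v j = \sum_j sq (v 0 j).
Proof. by apply: eq_bigr => j _; rewrite /nrc big_ord1. Qed.

Lemma norm_inv (R : realType) n (U : 'M[R[i]]_n) k (v : 'M[R[i]]_(k, n)) :
  U *m U^t* = 1%:M -> \sum_j nrc (v *m U^t*) j = \sum_j nrc v j.
Proof.
move=> Uu; apply: (@complexI R).
have h := TF v (spec_id Uu); rewrite mulmx1 nrc_sum in h.
have e1 : \sum_j 1 * nrc (v *m U^t*) j = \sum_j nrc (v *m U^t*) j.
  by apply: eq_bigr => j _; rewrite mul1r.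
by rewrite e1 in h; rewrite h.
Qed.

Lemma unitary_unit (R : realType) n (U : 'M[R[i]]_n) :
  U *m U^t* = 1%:M -> U \in unitmx.
Proof. by move=> Uu; case: (mulmx1_unit Uu). Qed.

Lemma WEYL (R : realType) n (H1 H2 H3 U1 U2 U3 : 'M[R[i]]_n) (nu mu e : 'I_n -> R) (c : R) (i : 'I_n) :
  spec H1 U1 nu -> spec H2 U2 mu -> spec H3 U3 e -> H1 = H2 + (c%:C)%C *: H3 -> 0 <= c ->
  (forall j, e j <= 1) ->
  (forall i j : 'I_n, (i <= j)%N -> nu j <= nu i) ->
  (forall i j : 'I_n, (i <= j)%N -> mu j <= mu i) ->
  nu i <= mu i + c.
Proof.
move=> s1 s2 s3 eH c0 e1 ns ms.
have U1u := s1.1; have U2u := s2.1; have U3u := s3.1.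
pose E1 := (pid_mx i.+1 : 'M[R[i]]_n) *m U1.
pose E2 := (copid_mx i : 'M[R[i]]_n) *m U2.
have r1 : \rank E1 = i.+1.
  by rewrite mxrankMfree ?row_free_unit ?unitary_unit // rank_pid_mx.
have r2 : \rank E2 = (n - i)%N.
  by rewrite mxrankMfree ?row_free_unit ?unitary_unit // rank_copid_mx // ltnW.
have hs := mxrank_sum_cap E1 E2.
have hc := rank_leq_col (E1 + E2)%MS.
have rc : \rank (E1 :&: E2)%MS != 0%N.
  apply/negP => /eqP h0; move: hs; rewrite h0 addn0 r1 r2 => hs.
  by move: hc; rewrite hs addSn (subnKC (ltnW (ltn_ord i))) ltnn.
pose v := nz_row (E1 :&: E2)%MS.
have vn0 : v != 0 by rewrite nz_row_eq0 -mxrank_eq0.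
have [y vy] : exists y, v = y *m E1.
  by apply/submxP; apply: submx_trans (nz_row_sub _) (capmxSl _ _).
have [z vz] : exists z, v = z *m E2.
  by apply/submxP; apply: submx_trans (nz_row_sub _) (capmxSr _ _).
pose a := y *m (pid_mx i.+1 : 'M[R[i]]_n).
pose b := z *m (copid_mx i : 'M[R[i]]_n).
have va : v *m U1^t* = a by rewrite vy /E1 -!mulmxA U1u mulmx1.
have vb : v *m U2^t* = b by rewrite vz /E2 -!mulmxA U2u mulmx1.
have a0 : forall j : 'I_n, (i < j)%N -> a 0 j = 0.
  by move=> j ij; rewrite pidE ltnS leqNgt ij.
have b0 : forall j : 'I_n, (j < i)%N -> b 0 j = 0.
  by move=> j ij; rewrite copidE ij.
pose N := \sum_j nrc v j.
have Na : \sum_j sq (a 0 j) = N by rewrite -sum_nrc_row -va norm_inv.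
have Nb : \sum_j sq (b 0 j) = N by rewrite -sum_nrc_row -vb norm_inv.
have N3 : \sum_j nrc (v *m U3^t*) j = N by rewrite norm_inv.
have Npos : 0 < N.
  rewrite lt_def sumr_ge0 ?andbT => [|j _]; last exact: nrc_ge0.
  apply/negP => /eqP N0; case/negP: vn0; apply/eqP/rowP => j.
  rewrite mxE; move: (N0); rewrite /N sum_nrc_row => N0'.
  have := psumr_eq0P (fun k _ => sq_ge0 (v 0 k)) N0' (isT : predT j).
  by move/(_ j); exact: sq_eq0.
have T1 := TF v s1; have T2 := TF v s2; have T3 := TF v s3.
have : ((\sum_j nu j * nrc (v *m U1^t*) j)%:C)%C
   = ((\sum_j mu j * nrc (v *m U2^t*) j + c * \sum_j e j * nrc (v *m U3^t*) j)%:C)%C.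
  by rewrite -T1 eH tr_split T2 T3 rmorphD rmorphM.
move/complexI; rewrite va vb => eT.
have L1 : nu i * N <= \sum_j nu j * nrc a j.
  rewrite -Na mulr_sumr; apply: ler_sum => j _; rewrite /nrc big_ord1.
  case: (leqP (j : nat) i) => ji.
    by apply: ler_wpM2r; [exact: sq_ge0 | exact: ns].
  by rewrite a0 // /sq /= expr0n /= addr0 !mulr0.
have L2 : \sum_j mu j * nrc b j <= mu i * N.
  rewrite -Nb mulr_sumr; apply: ler_sum => j _; rewrite /nrc big_ord1.
  case: (leqP i (j : nat)) => ji.
    by apply: ler_wpM2r; [exact: sq_ge0 | exact: ms].
  by rewrite b0 // /sq /= expr0n /= addr0 !mulr0.
have L3 : \sum_j e j * nrc (v *m U3^t*) j <= N.
  rewrite -N3; apply: ler_sum => j _.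
  by rewrite -{2}[nrc _ j]mul1r; apply: ler_wpM2r; [exact: nrc_ge0 | exact: e1].
have : nu i * N <= (mu i + c) * N.
  apply: (le_trans L1); rewrite eT mulrDl; apply: lerD => //.
  exact: (ler_wpM2l c0 L3).
by rewrite ler_pM2r.
Qed.
Lemma PERM (T : eqType) n (f g : 'I_n -> T) :
  perm_eq [seq f i | i <- enum 'I_n] [seq g i | i <- enum 'I_n] ->
  exists s : 'S_n, forall i, f i = g (s i).
Proof.
move=> pe.
have : perm_eq [tuple f i | i < n] [tuple g i | i < n].
  by [].
case/tuple_permP => s /val_inj hs; exists s => i.
have := congr1 (fun t => tnth t i) hs.
by rewrite !tnth_mktuple.
Qed.

Lemma SR (R : realType) n (H : 'M[R[i]]_n) (lam : 'I_n -> R) :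
  H^t* = H -> char_poly H = \prod_(i < n) ('X - ((lam i)%:C%C)%:P) ->
  exists U, spec H U lam.
Proof.
move=> Hh cH.
have Hn : H \is normalmx by apply/normalmxP; rewrite Hh.
have HP := orthomx_spectralP Hn.
set P := spectralmx H in HP; set dd := spectral_diag H in HP.
have Pu : P \is unitarymx by exact: spectral_unitarymx.
have Pu' : P *m P^t* = 1%:M by apply/unitarymxP.
have cD : char_poly H = \prod_(i < n) ('X - (dd 0 i)%:P).
  rewrite HP char_poly_conj ?unitarymx_unit // char_poly_trig ?diag_mx_is_trig //.
  by apply: eq_bigr => i _; rewrite mxE eqxx mulr1n.
have pe : perm_eq [seq dd 0 i | i <- enum 'I_n] [seq (lam i)%:C%C | i <- enum 'I_n].
  apply: prod_XsubC_eq; rewrite !big_map.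
  exact: (etrans (esym cD) cH).
have [s hs] := PERM pe.
pose Ps : 'M[R[i]]_n := perm_mx s.
have eD : diag_mx dd = Ps *m diag_mx (\row_j ((lam j)%:C)%C) *m Ps^T.
  rewrite /Ps tr_perm_mx -row_permE -col_permE.
  apply/matrixP => i j; rewrite !mxE hs (inj_eq perm_inj).
  by case: eqP => // ->.
exists (Ps^T *m P); split.
  rewrite trmxC_mul mulmxA -[Ps^T *m P *m P^t*]mulmxA Pu' mulmx1.
  by rewrite /Ps trmxK map_perm_mx tr_perm_mx -perm_mxM mulVg perm_mx1.
rewrite {1}HP invmx_unitary // eD trmxC_mul /Ps trmxK map_perm_mx.
by rewrite !mulmxA.
Qed.
Lemma Mx_eq (R : realType) n (A : 'M[R]_n) (x : 'I_n -> R) :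
  Mx A x = A *m diag_mx (\row_i x i) *m A^T.
Proof.
rewrite /Mx mul_mx_diag; apply/matrixP => j k; rewrite summxE !mxE.
by apply: eq_bigr => i _; rewrite !mxE big_ord1 !mxE mulrA [x i * _]mulrC.
Qed.

Lemma diag_sqrt (R : realType) n (x : 'I_n -> R) : (forall i, 0 <= x i) ->
  diag_mx (\row_i Num.sqrt (x i)) *m diag_mx (\row_i Num.sqrt (x i)) = diag_mx (\row_i x i).
Proof.
move=> x0; rewrite mul_mx_diag; apply/matrixP => j k; rewrite !mxE.
case: eqP => [->|_]; last by rewrite !mulr0n mul0r.
by rewrite !mulr1n -expr2 sqr_sqrtr.
Qed.

Lemma charMx (R : realType) n (A : 'M[R]_n) (x : 'I_n -> R) : (forall i, 0 <= x i) ->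
  char_poly (Mx A x) =
  char_poly (diag_mx (\row_i Num.sqrt (x i)) *m (A^T *m A) *m diag_mx (\row_i Num.sqrt (x i))).
Proof.
move=> x0; set Dq := diag_mx _.
rewrite Mx_eq -(diag_sqrt x0) -/Dq.
have -> : A *m (Dq *m Dq) *m A^T = (A *m Dq) *m (Dq *m A^T) by rewrite !mulmxA.
by rewrite char_poly_mulC !mulmxA.
Qed.

Lemma toC_real (R : realType) (r : R) : ((r%:C)%C : R[i]) \is Num.real.
Proof. by rewrite complex_real. Qed.

Lemma herm_map (R : realType) n (S : 'M[R]_n) :
  S^T = S -> (map_mx (real_complex R) S)^t* = map_mx (real_complex R) S.
Proof.
move=> St; apply/matrixP => i j; rewrite !mxE conj_Creal ?toC_real //.
by rewrite -{2}St mxE.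
Qed.

Lemma char_map (R : realType) n (S : 'M[R]_n) (lam : 'I_n -> R) :
  char_poly S = \prod_(i < n) ('X - (lam i)%:P) ->
  char_poly (map_mx (real_complex R) S) = \prod_(i < n) ('X - ((lam i)%:C%C)%:P).
Proof.
move=> cS; rewrite -map_char_poly cS rmorph_prod; apply: eq_bigr => i _.
exact: map_polyXsubC.
Qed.

Lemma spec_diag (R : realType) n (x : 'I_n -> R) :
  spec (map_mx (real_complex R) (diag_mx (\row_i x i))) 1%:M x.
Proof.
split; first exact: unitary1.
rewrite trmx1 map_mx1 mul1mx mulmx1; apply/matrixP => i j; rewrite !mxE.
by rewrite rmorphMn.
Qed.
Lemma sum_lt_one (R : realType) n m : (m <= n)%N ->
  \sum_(i < n | (i < m)%N) (1 : R) = m%:R.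
Proof. by move=> mn; rewrite -(big_ord_widen n (fun _ => (1 : R)) mn) sumr_const card_ord. Qed.

Lemma ind_sorted (R : realType) n s (y : 'I_n -> R) (t : R) : 0 <= t ->
  (forall i j : 'I_n, (i <= j)%N -> y j <= y i) ->
  (forall i j : 'I_n, (i <= j)%N -> y j + t * @ind R n s j <= y i + t * @ind R n s i).
Proof.
move=> t0 ys i j ij; apply: lerD; first exact: ys.
apply: ler_wpM2l => //; rewrite /ind.
case: ifP => hj; first by rewrite ifT // (leq_ltn_trans ij hj).
by case: ifP.
Qed.

Lemma sum_ind_lt (R : realType) n s l : (l <= n)%N ->
  \sum_(i < n | (i < l)%N) @ind R n s i = (minn l s)%:R.
Proof.
move=> ln; rewrite /ind -big_mkcondr /=.
have -> : \sum_(i < n | (i < l)%N && (i < s)%N) (1 : R) = \sum_(i < n | (i < minn l s)%N) 1.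
  by apply: eq_bigl => i; rewrite leq_min.
by rewrite sum_lt_one // (leq_trans (geq_minl _ _) ln).
Qed.

Lemma sum_ind (R : realType) n s : (s <= n)%N -> \sum_(i < n) @ind R n s i = s%:R.
Proof.
move=> sn; rewrite /ind -big_mkcond /=.
exact: sum_lt_one.
Qed.

Lemma symS (R : realType) n (A D : 'M[R]_n) : D^T = D ->
  (D *m (A^T *m A) *m D)^T = D *m (A^T *m A) *m D.
Proof. by move=> Dt; rewrite !trmx_mul trmxK Dt !mulmxA. Qed.
Unset Implicit Arguments.

Theorem lemma1 (R : realType) (n s : nat) (C : 'M[R]_n) (x : 'I_n -> R)
    (lamC : 'I_n -> R) (t1 t2 : R) (A1 A2 : 'M[R]_n) (nu mu : 'I_n -> R) :
  (1 <= n)%N -> (1 <= s <= n)%N ->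
  sym_pd C ->
  (forall i, 0 <= x i <= 1) -> \sum_(i < n) x i = s%:R ->
  sorted_eigs C lamC ->
  0 <= t1 -> t1 <= t2 -> (forall i, t2 <= lamC i) ->
  cholesky_factor (C - t1%:M) A1 -> cholesky_factor (C - t2%:M) A2 ->
  sorted_eigs (Mx A1 x) nu -> sorted_eigs (Mx A2 x) mu ->
  [/\ majorizes (fun i => mu i + t2 * @ind R n s i) (fun i => nu i + t1 * @ind R n s i),
      (forall l : nat, (1 <= l <= s)%N ->
         \sum_(i < n | (i < l)%N) mu i + (t2 - t1) * psum x l
           >= \sum_(i < n | (i < l)%N) nu i)
    & (forall i : 'I_n, (i < s)%N -> mu i + t2 - t1 >= nu i)].
Proof.
move=> n1 /andP[s1 sn] _ x01 xs _ t10 t12 _ [ch1 _] [ch2 _] [nus nuc] [mus muc].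
have x0 : forall i, 0 <= x i by move=> i; case/andP: (x01 i).
have x1 : forall i, x i <= 1 by move=> i; case/andP: (x01 i).
have c0 : 0 <= t2 - t1 by rewrite subr_ge0.
set Dq := diag_mx (\row_i Num.sqrt (x i)).
set X := diag_mx (\row_i x i).
have Dqt : Dq^T = Dq by rewrite /Dq tr_diag_mx.
pose S1 := Dq *m (A1^T *m A1) *m Dq.
pose S2 := Dq *m (A2^T *m A2) *m Dq.
have cS1 : char_poly S1 = \prod_(i < n) ('X - (nu i)%:P) by rewrite -nuc charMx.
have cS2 : char_poly S2 = \prod_(i < n) ('X - (mu i)%:P) by rewrite -muc charMx.
have eS : S1 = S2 + (t2 - t1) *: X.
  rewrite /S1 /S2 -ch1 -ch2.
  have -> : C - t1%:M = (C - t2%:M) + (t2 - t1)%:M.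
    by rewrite raddfB /= addrA subrK.
  rewrite mulmxDr mulmxDl mul_mx_scalar -scalemxAl /X -diag_sqrt //.
pose toC := real_complex R.
pose H1 := map_mx toC S1.
pose H2 := map_mx toC S2.
pose XC := map_mx toC X.
have [U1 sp1] := SR (herm_map (symS A1 Dqt)) (char_map cS1).
have [U2 sp2] := SR (herm_map (symS A2 Dqt)) (char_map cS2).
have sp3 : spec XC 1%:M x by exact: spec_diag.
have eH : H1 = H2 + ((t2 - t1)%:C)%C *: XC by rewrite /H1 eS map_mxD map_mxZ.
have KFl : forall l, (l <= n)%N ->
    \sum_(i < n | (i < l)%N) nu i <= \sum_(i < n | (i < l)%N) mu i + (t2 - t1) * psum x l.
  by move=> l ln; exact: (KF sp1 sp2 sp3 eH c0 mus ln).
split.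
- split.
    move=> l /andP [l1 ln1].
    have ln : (l <= n)%N by apply: (leq_trans ln1); rewrite leq_pred.
    rewrite !psum_sorted //; try exact: (ind_sorted _ (le_trans t10 t12) mus); try exact: (ind_sorted _ t10 nus).
    rewrite !big_split /= -!mulr_sumr sum_ind_lt //.
    have hp : psum x l <= (minn l s)%:R.
      case: (leqP l s) => ls.
        exact: psum_le_l.
      by rewrite -xs; exact: psum_le_sum.
    apply: (le_trans (lerD (KFl l ln) (lexx (t1 * (minn l s)%:R)))).
    rewrite -addrA lerD2l.
    apply: (@le_trans _ _ ((t2 - t1) * (minn l s)%:R + t1 * (minn l s)%:R)).
      by rewrite lerD2r; exact: ler_wpM2l.
    by rewrite -mulrDl subrK.
  have tr1 := TRACE sp1; have tr2 := TRACE sp2; have tr3 := TRACE sp3.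
  have : ((\sum_j nu j)%:C)%C = ((\sum_j mu j + (t2 - t1) * \sum_j x j)%:C)%C.
    rewrite -tr1; change (\tr H1 = ((\sum_j mu j + (t2 - t1) * \sum_j x j)%:C)%C).
    by rewrite eH mxtraceD mxtraceZ tr2 tr3 -toC_mul rmorphD.
  move/complexI => e.
  rewrite !big_split /= -!mulr_sumr sum_ind // e xs.
  by rewrite -addrA -mulrDl subrK.
- move=> l /andP [l1 ls]; exact: KFl (leq_trans ls sn).
- move=> i _; rewrite -addrA.
  exact: (WEYL i sp1 sp2 sp3 eH c0 x1 nus mus).
Qed.
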